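(* Let $(E,A)$ satisfy the standing assumptions below and set $p:=p_{\mathrm{res}}^{(E,A)}+1$. If $E(X_{\operatorname{ran}})$ is closed and $X_{\operatorname{ran}} \cap \ker R_r(\mu)^p = \{0\}$, then $E\colon X_{\operatorname{ran}} \to Z_{\operatorname{ran}}$ is boundedly invertible.
   Context: Standing assumptions: $X$, $Z$ complex Banach spaces; $E\in L(X,Z)$; $A\colon\mathrm{dom}(A)\subseteq X\to Z$ closed and densely defined; $(E,A)$ has a complex resolvent index $p_{\mathrm{res}}^{(E,A)}$, i.e.~the smallest $n\in\mathbb N_0$ such that for some $\omega\in\mathbb R$, $C>0$, $\mathbb C_{\operatorname{Re}>\omega}\subseteq\rho(E,A)$ and $\Vert(\lambda E-A)^{-1}\Vert\le C|\lambda|^{n-1}$ for all $\lambda\in\mathbb C_{\operatorname{Re}>\omega}$. $\mu\in\rho(E,A)$, $R_r(\lambda)=(\lambda E-A)^{-1}E$, $R_l(\lambda)=E(\lambda E-A)^{-1}$, $X_{\operatorname{ran}}=\overline{\operatorname{ran}R_r(\mu)^p}$, $Z_{\operatorname{ran}}=\overline{\operatorname{ran}R_l(\mu)^p}$ (closures of ranges). *)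

(* Defs.v *)
From HB Require Import structures.
From mathcomp Require Import all_boot all_order all_algebra.
From mathcomp Require Import all_classical all_reals all_analysis.
From mathcomp Require Import complex.
Set Implicit Arguments. Unset Strict Implicit. Unset Printing Implicit Defensive.
Import Order.TTheory GRing.Theory Num.Theory.
Import numFieldNormedType.Exports.
Local Open Scope classical_set_scope.
Local Open Scope ring_scope.

Section Defs.
Variable R : realType.
Local Notation C := (R[i]).
Variables (X Z : completeNormedModType C).

Definition is_linear {U V : lmodType C} (f : U -> V) : Prop :=
  forall (a : C) (x y : U), f (a *: x + y) = a *: f x + f y.

Definition lin_op_on (domA : set X) (A : X -> Z) : Prop :=
  domA 0 /\
  (forall (a : C) x y, domA x -> domA y -> domA (a *: x + y)) /\
  (forall (a : C) x y, domA x -> domA y -> A (a *: x + y) = a *: A x + A y).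

Definition graph_op (domA : set X) (A : X -> Z) : set (X * Z) :=
  [set xz | domA xz.1 /\ xz.2 = A xz.1].

Definition closed_densely_defined (domA : set X) (A : X -> Z) : Prop :=
  lin_op_on domA A /\ closed (graph_op domA A) /\ closure domA = setT.

Definition is_resolvent (E : X -> Z) (domA : set X) (A : X -> Z)
    (lam : C) (Rl : Z -> X) : Prop :=
  is_linear Rl /\ continuous Rl /\
  (forall z, domA (Rl z) /\ lam *: E (Rl z) - A (Rl z) = z) /\
  (forall x, domA x -> Rl (lam *: E x - A x) = x).

Definition resolvent_set (E : X -> Z) (domA : set X) (A : X -> Z) : set C :=
  [set lam | exists Rl, is_resolvent E domA A lam Rl].

(* growth condition: C_{Re > omega} ⊆ rho(E,A) and
   ||(lam E - A)^{-1}|| <= K |lam|^(n-1) on C_{Re > omega}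
   (operator-norm bound written out pointwise) *)
Definition resolvent_growth (E : X -> Z) (domA : set X) (A : X -> Z) (n : nat)
  : Prop :=
  exists (omega : R) (K : R), 0 < K /\
    forall lam : C, omega < complex.Re lam ->
      exists Rl, is_resolvent E domA A lam Rl /\
        forall z, `|Rl z| <= (K%:C)%C * `|lam| ^ (n%:Z - 1) * `|z|.

Definition resolvent_index (E : X -> Z) (domA : set X) (A : X -> Z) (n : nat)
  : Prop :=
  resolvent_growth E domA A n /\
  forall m, resolvent_growth E domA A m -> (n <= m)%N.

Definition boundedly_invertible_between (T : X -> Z) (Xs : set X) (Zs : set Z)
  : Prop :=
  T @` Xs `<=` Zs /\
  exists S : Z -> X,
    (forall z, Zs z -> Xs (S z) /\ T (S z) = z) /\
    (forall x, Xs x -> S (T x) = x) /\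
    exists c : R, forall z, Zs z -> `|S z| <= (c%:C)%C * `|z|.

End Defs.

(* Main.v *)
Require Import Defs.
From HB Require Import structures.
From mathcomp Require Import all_boot all_order all_algebra.
From mathcomp Require Import all_classical all_reals all_analysis.
From mathcomp Require Import complex.
Import Order.TTheory GRing.Theory Num.Theory.
Import numFieldNormedType.Exports.
Local Open Scope classical_set_scope.
Local Open Scope ring_scope.
From mathcomp Require Import lra ring.
Set Implicit Arguments. Unset Strict Implicit.

Section S.
Variable R : realType.
Local Notation C := R[i].

Definition nrm {V : normedZmodType C} (x : V) : R := complex.Re `|x|.

Lemma nrmE {V : normedZmodType C} (x : V) : `|x| = ((nrm x)%:C)%C.
Proof. by rewrite /nrm RRe_real // normr_real. Qed.

Lemma nrm_ge0 {V : normedZmodType C} (x : V) : 0 <= nrm x.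
Proof. by rewrite -ler0c -nrmE. Qed.

Lemma nrmD {V : normedZmodType C} (x y : V) : nrm (x + y) <= nrm x + nrm y.
Proof. by have := ler_normD x y; rewrite !nrmE -(raddfD (real_complex R)) lecR. Qed.

Lemma nrmN {V : normedZmodType C} (x : V) : nrm (- x) = nrm x.
Proof. by rewrite /nrm normrN. Qed.

Lemma nrmC {V : normedZmodType C} (x y : V) : nrm (x - y) = nrm (y - x).
Proof. by rewrite /nrm distrC. Qed.

Lemma nrmZ {V : normedModType C} (a : C) (x : V) : nrm (a *: x) = nrm a * nrm x.
Proof. by apply: complexI; rewrite (rmorphM (real_complex R)) /= -nrmE -(nrmE a) -(nrmE x) normrZ. Qed.

Lemma nrm0 {V : normedZmodType C} : nrm (0 : V) = 0.
Proof. by rewrite /nrm normr0. Qed.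

Lemma nrm_eq0 {V : normedZmodType C} (x : V) : (nrm x == 0) = (x == 0).
Proof. apply/eqP/eqP => [h|->]; last exact: nrm0. by apply/normr0_eq0; rewrite nrmE h. Qed.

Lemma nrmR (r : R) : nrm ((r%:C)%C : C) = `|r|.
Proof. by rewrite /nrm normc_def /= expr0n /= addr0 sqrtr_sqr. Qed.

Lemma nrm_lt {V : normedZmodType C} (x : V) (e : R) : (`|x| < (e%:C)%C) = (nrm x < e).
Proof. by rewrite nrmE ltcR. Qed.
Lemma nrm_le {V : normedZmodType C} (x : V) (e : R) : (`|x| <= (e%:C)%C) = (nrm x <= e).
Proof. by rewrite nrmE lecR. Qed.


Lemma closureP {V : normedModType C} (A : set V) x :
  closure A x <-> (forall e : R, 0 < e -> exists y, A y /\ nrm (x - y) < e).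
Proof.
split.
- move=> cl e e0.
  have : nbhs x (ball x (e%:C)%C).
    by apply/nbhs_ballP; exists (e%:C)%C => //=; rewrite ltcE /= eqxx e0.
  move/cl => [y [Ay bxy]]; exists y; split => //.
  by move: bxy; rewrite -ball_normE /= nrm_lt.
- move=> h B /nbhs_ballP [e e0 sB].
  have ee : e = ((complex.Re e)%:C)%C by rewrite RRe_real // gtr0_real.
  have e0' : 0 < complex.Re e by move: e0 => /=; rewrite ltcE => /andP[].
  have [y [Ay hy]] := h _ e0'.
  exists y; split => //; apply: sB; rewrite -ball_normE /= ee nrm_lt //.
Qed.

Lemma closedP {V : normedModType C} (A : set V) x : closed A ->
  (forall e : R, 0 < e -> exists y, A y /\ nrm (x - y) < e) -> A x.
Proof. by move=> /closure_id cA h; rewrite cA; apply/closureP. Qed.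

Lemma cauchy_lim {V : completeNormedModType C} (u : nat -> V) (rho : nat -> R) :
  (forall k m, (k <= m)%N -> nrm (u m - u k) <= rho k) ->
  (forall e, 0 < e -> exists k, rho k < e) ->
  exists l, u @ \oo --> l /\ forall k, nrm (l - u k) <= rho k.
Proof.
move=> hu hr.
have cu : cvg (u @ \oo).
  apply: cauchy_cvg; apply: cauchy_exP => e e0.
  have ee : e = ((complex.Re e)%:C)%C by rewrite RRe_real // gtr0_real.
  have e0' : 0 < complex.Re e by move: e0; rewrite ltcE => /andP[].
  have [k hk] := hr _ e0'.
  exists (u k); exists k => // m /= km.
  rewrite -ball_normE /= ee nrm_lt nrmC.
  exact: le_lt_trans (hu _ _ km) hk.
exists (lim (u @ \oo)); split => // k.
apply/ler_addgt0Pr => e e0.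
have e0c : (0 < (e%:C)%C :> C) by rewrite ltcE /= eqxx e0.
 have [N _ HN] := cvgr_dist_lt _ _ cu _ e0c.
have := HN (maxn N k) (leq_maxl _ _); rewrite nrm_lt => h1.
have h2 := hu k (maxn N k) (leq_maxr _ _).
have := nrmD (lim (u @ \oo) - u (maxn N k)) (u (maxn N k) - u k).
rewrite addrA subrK; lra.
Qed.

Lemma geo_small (e : R) : 0 < e -> exists k : nat, (2^-1) ^+ k < e.
Proof.
move=> e0; exists (Num.truncn e^-1).+1.
have h1 : e^-1 < (Num.truncn e^-1).+1%:R by exact: truncnS_gt.
have h2 : ((Num.truncn e^-1).+1%:R : R) <= 2 ^+ (Num.truncn e^-1).+1.
  by rewrite -natrX ler_nat ltnW // ltn_expl.
rewrite exprVn -[X in _ < X]invrK ltf_pV2 ?posrE ?exprn_gt0 ?invr_gt0 //.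
exact: lt_le_trans h1 h2.
Qed.
End S.

Section S.
Variable R : realType.
Local Notation C := R[i].

Lemma not_closure_nbhs {Z : normedModType C} (S : set Z) w : ~ closure S w ->
  exists s : R, 0 < s /\ forall u, nrm (u - w) < s -> ~ closure S u.
Proof.
move=> ncl.
have [e [e0 he]] : exists e : R, 0 < e /\ forall y, S y -> e <= nrm (w - y).
  apply: contrapT => hne; apply: ncl; apply/closureP => e e0.
  apply: contrapT => hny; apply: hne; exists e; split => // y Sy.
  rewrite leNgt; apply/negP => hlt; apply: hny; exists y; done.
exists (e / 2); split; first lra.
move=> u hu /closureP /(_ (e/2)) [|y [Sy hy]]; first lra.
have := he y Sy; have := nrmD (w - u) (u - y); rewrite addrA subrK (nrmC w u).
lra.
Qed.

Lemma baire_step {Z : completeNormedModType C} (W : set Z) (S : nat -> set Z) :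
  closed W -> W !=set0 -> (forall w, W w -> exists n, S n w) ->
  exists n w0 r, W w0 /\ 0 < r /\
    forall w, W w -> nrm (w - w0) < r -> closure (S n) w.
Proof.
move=> cW [a Wa] hS.
case: (pselect (exists n w0 r, W w0 /\ 0 < r /\
    forall w, W w -> nrm (w - w0) < r -> closure (S n) w)) => // Hn.
exfalso.
have step : forall n w0 r, W w0 -> 0 < r ->
    exists w, W w /\ nrm (w - w0) < r /\ ~ closure (S n) w.
  move=> n w0 r Ww0 r0; apply: contrapT => hno; apply: Hn.
  exists n, w0, r; split => //; split => // w Ww hw.
  by apply: contrapT => hc; apply: hno; exists w.
pose P (k : nat) (p q : Z * R) := W p.1 -> 0 < p.2 ->
  [/\ W q.1, 0 < q.2, nrm (q.1 - p.1) < p.2 / 4, q.2 <= p.2 / 2 &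
      forall u, nrm (u - q.1) <= q.2 / 2 -> ~ closure (S k) u].
have Hst : forall kp : nat * (Z * R), exists q, P kp.1 kp.2 q.
  move=> [k [w0 r]].
  case: (pselect (W w0 /\ 0 < r)) => [[Ww0 r0]|hn]; last first.
    by exists (w0, r) => /= h1 h2; exfalso; apply: hn.
  have [w [Ww [hw ncl]]] := step k w0 (r/4) Ww0 (ltac:(lra)).
  have [s [s0 hs]] := not_closure_nbhs ncl.
  exists (w, Num.min (r/2) s) => /= _ _.
  have hm1 : Num.min (r/2) s <= r/2 by rewrite ge_min lexx.
  have hm2 : Num.min (r/2) s <= s by rewrite ge_min lexx orbT.
  have hm0 : 0 < Num.min (r/2) s by rewrite lt_min s0 andbT; lra.
  split => // u /= hu; apply: hs; lra.
have [f Hf] := choice Hst.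
pose fix sq k := if k is j.+1 then f (j, sq j) else (a, 1).
have Pk : forall k, P k (sq k) (sq k.+1) by move=> k; exact: (Hf (k, sq k)).
have Wk : forall k, W (sq k).1 /\ 0 < (sq k).2.
  elim => [|k [IH1 IH2]]; first by split => //=; lra.
  by have [] := Pk k IH1 IH2.
have Pk' : forall k, [/\ W (sq k.+1).1, 0 < (sq k.+1).2,
    nrm ((sq k.+1).1 - (sq k).1) < (sq k).2 / 4, (sq k.+1).2 <= (sq k).2 / 2 &
      forall u, nrm (u - (sq k.+1).1) <= (sq k.+1).2 / 2 -> ~ closure (S k) u].
  by move=> k; have [h1 h2] := Wk k; exact: Pk.
have inv : forall k m, (k <= m)%N ->
    nrm ((sq m).1 - (sq k).1) + (sq m).2 / 2 <= (sq k).2 / 2.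
  move=> k; elim => [|m IH].
    by rewrite leqn0 => /eqP ->; rewrite subrr nrm0; lra.
  rewrite leq_eqVlt => /orP [/eqP <-|]; first by rewrite subrr nrm0; lra.
  rewrite ltnS => /IH h.
  have [_ _ h1 h2 _] := Pk' m.
  have := nrmD ((sq m.+1).1 - (sq m).1) ((sq m).1 - (sq k).1).
  rewrite addrA subrK; lra.
have geo : forall k, (sq k).2 <= (2^-1) ^+ k.
  elim => [|k IH]; first by rewrite expr0.
  have [_ _ _ h _] := Pk' k; rewrite exprS.
  have : (sq k).2 / 2 <= 2^-1 * 2^-1 ^+ k by lra.
  by apply: le_trans.
have [w [_ hw]] := @cauchy_lim _ _ (fun k => (sq k).1) (fun k => (sq k).2 / 2)
  (fun k m km => ltac:(have := inv k m km; have := nrm_ge0 ((sq m).1 - (sq k).1);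
       have := (Wk m).2; lra))
  (fun e e0 => ltac:(have [k hk] := geo_small e0; exists k;
       have := geo k; lra)).
have Ww : W w.
  apply: (closedP cW) => e e0.
  have [k hk] := geo_small e0; exists (sq k).1; split; first exact: (Wk k).1.
  have := hw k; have := geo k; have := (Wk k).2; lra.
have [n Sn] := hS w Ww.
have [_ _ _ _ h] := Pk' n.
by apply: (h w (hw n.+1)); apply: subset_closure.
Qed.


Lemma geo_small2 (c e : R) : 0 <= c -> 0 < e -> exists k : nat, c * (2^-1) ^+ k < e.
Proof.
move=> c0 e0.
have ce0 : 0 < e / (c + 1) by apply: divr_gt0 => //; lra.
have [k hk] := geo_small ce0; exists k.
have g0 : 0 <= (2^-1 : R) ^+ k by apply: exprn_ge0; rewrite invr_ge0.
have c1 : 0 < c + 1 by lra.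
have : (c + 1) * (2^-1) ^+ k < (c + 1) * (e / (c + 1)) by rewrite ltr_pM2l.
rewrite (mulrC (c + 1) (e / (c + 1))) divfK ?gt_eqF // => h.
have : c * (2^-1) ^+ k <= (c + 1) * (2^-1) ^+ k by rewrite mulrDl mul1r lerDl.
lra.
Qed.

End S.

Section S.
Variable R : realType.
Local Notation C := R[i].

Lemma omt_approx {X Z : completeNormedModType C} (T : {linear X -> Z}) (V : set X) :
  closed V -> V 0 -> (forall (a : C) x y, V x -> V y -> V (a *: x + y)) ->
  closed (T @` V) ->
  exists M : R, 0 <= M /\ forall w rho eps, (T @` V) w -> 0 < rho -> nrm w < rho ->
     0 < eps -> exists v, V v /\ nrm v <= M * rho /\ nrm (w - T v) < eps.
Proof.
move=> cV V0 VL cW.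
have VZ : forall (a : C) x, V x -> V (a *: x).
  by move=> a x Vx; rewrite -[_ *: _]addr0; apply: VL.
have VD : forall x y, V x -> V y -> V (x + y).
  by move=> x y Vx Vy; rewrite -[x]scale1r; apply: VL.
have VB : forall x y, V x -> V y -> V (x - y).
  by move=> x y Vx Vy; rewrite addrC -scaleN1r; apply: VL.
pose S (n : nat) := T @` [set v | V v /\ nrm v <= n%:R].
have [n [w0 [r [Ww0 [r0 hcl]]]]] : exists n w0 r, (T @` V) w0 /\ 0 < r /\
    forall w, (T @` V) w -> nrm (w - w0) < r -> closure (S n) w.
  apply: baire_step => //.
  - by exists (T 0); exists 0.
  - move=> _ [v Vv <-]; exists (Num.truncn (nrm v)).+1; exists v => //; split => //.
    exact/ltW/truncnS_gt.
exists (2 * n%:R / r); split.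
  by apply: divr_ge0; [apply: mulr_ge0 => //; lra | exact: ltW].
move=> w rho eps [v0 Vv0 <-] rho0 hw eps0.
case: (Ww0) => u0 Vu0 Tu0.
pose t := r / rho.
have t0 : 0 < t by apply: divr_gt0.
have tr : t * rho = r by rewrite /t divfK // gt_eqF.
pose ti := t^-1.
have ti0 : 0 < ti by rewrite invr_gt0.
have tit : ti * t = 1 by rewrite mulVf // gt_eqF.
pose tc := (t%:C)%C.  pose tic := (ti%:C)%C.
pose p := w0 + tc *: T v0.
have hp : (T @` V) p.
  exists (u0 + tc *: v0); first by apply: VD => //; apply: VZ.
  by rewrite linearD linearZ Tu0.
have np : nrm (p - w0) < r.
  rewrite /p [w0 + _]addrC addrK nrmZ nrmR (ger0_norm (ltW t0)).
  by rewrite -tr ltr_pM2l.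
have tep : 0 < t * eps / 2 by apply: divr_gt0 => //; apply: mulr_gt0.
have [y1 [[v1 [Vv1 nv1] Tv1] h1]] := (closureP _ _).1 (hcl _ hp np) _ tep.
have np0 : nrm (w0 - w0) < r by rewrite subrr nrm0.
have [y2 [[v2 [Vv2 nv2] Tv2] h2]] := (closureP _ _).1 (hcl _ Ww0 np0) _ tep.
exists (tic *: (v1 - v2)); split; first by apply: VZ; apply: VB.
split.
- rewrite nrmZ nrmR (ger0_norm (ltW ti0)).
  have := nrmD v1 (- v2); rewrite nrmN => hd.
  have e1 : ti = rho / r by rewrite /ti /t invf_div.
  have -> : 2 * n%:R / r * rho = ti * (2 * n%:R) by rewrite e1; ring.
  by rewrite ler_pM2l //; lra.
- have ew : T v0 = tic *: (p - w0).
    by rewrite /p [w0 + _]addrC addrK scalerA -(rmorphM (real_complex R)) tit rmorph1 scale1r.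
  have eT : T (tic *: (v1 - v2)) = tic *: (y1 - y2) by rewrite linearZ linearB Tv1 Tv2.
  rewrite ew eT -scalerBr nrmZ nrmR (ger0_norm (ltW ti0)).
  have -> : p - w0 - (y1 - y2) = (p - y1) - (w0 - y2).
    by rewrite !opprB addrACA [RHS]addrACA [- w0 + _]addrC.
  have := nrmD (p - y1) (- (w0 - y2)); rewrite nrmN => hd.
  have hlt : nrm (p - y1 - (w0 - y2)) < t * eps by lra.
  by move: hlt; rewrite -(ltr_pM2l ti0) mulrA tit mul1r.
Qed.

Lemma omt {X Z : completeNormedModType C} (T : {linear X -> Z}) (V : set X) :
  continuous T -> closed V -> V 0 ->
  (forall (a : C) x y, V x -> V y -> V (a *: x + y)) -> closed (T @` V) ->
  exists c : R, forall w, (T @` V) w ->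
    exists x, V x /\ T x = w /\ nrm x <= c * nrm w.
Proof.
move=> cT cV V0 VL cW.
have [M [M0 hA]] := omt_approx cV V0 VL cW.
have VD : forall x y, V x -> V y -> V (x + y).
  by move=> x y Vx Vy; rewrite -[x]scale1r; apply: VL.
have VB : forall x y, V x -> V y -> V (x - y).
  by move=> x y Vx Vy; rewrite addrC -scaleN1r; apply: VL.
have main : forall w rho, (T @` V) w -> 0 < rho -> nrm w < rho ->
    exists x, V x /\ T x = w /\ nrm x <= 2 * M * rho.
  move=> w rho Ww rho0 hw.
  case: (Ww) => v0 Vv0 Tv0.
  pose h k := rho * (2^-1) ^+ k.
  have h0 k : 0 < h k by apply: mulr_gt0 => //; apply: exprn_gt0; rewrite invr_gt0.
  have hS k : h k.+1 = h k / 2 by rewrite /h exprS; ring.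
  pose P (kx : nat * X) (x' : X) := V kx.2 -> nrm (w - T kx.2) < h kx.1 ->
     [/\ V x', nrm (w - T x') < h kx.1.+1 & nrm (x' - kx.2) <= M * h kx.1].
  have Hst : forall kx, exists x', P kx x'.
    move=> [k x]; case: (pselect (V x /\ nrm (w - T x) < h k)) => [[Vx hx]|hn];
      last by exists x => /= h1 h2; case: hn.
    have Wq : (T @` V) (w - T x) by exists (v0 - x); [apply: VB | rewrite linearB Tv0].
    have [v [Vv [nv hv]]] := hA _ _ _ Wq (h0 k) hx (h0 k.+1).
    exists (x + v) => /= _ _; split.
    - exact: VD.
    - by rewrite linearD opprD addrA.
    - by rewrite addrC addKr.
  have [f Hf] := choice Hst.
  pose fix xs k := if k is j.+1 then f (j, xs j) else 0.
  have inv1 : forall k, V (xs k) /\ nrm (w - T (xs k)) < h k.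
    elim => [|k [IH1 IH2]]; first by split => //=; rewrite linear0 subr0 /h expr0 mulr1.
    by have [] := Hf (k, xs k) IH1 IH2.
  have st k : nrm (xs k.+1 - xs k) <= M * h k.
    by have [h1 h2] := inv1 k; have [] := Hf (k, xs k) h1 h2.
  have Mh k : 0 <= M * h k by apply: mulr_ge0 => //; exact: ltW.
  have inv2 : forall k m, (k <= m)%N ->
      nrm (xs m - xs k) + 2 * (M * h m) <= 2 * (M * h k).
    move=> k; elim => [|m IH].
      by rewrite leqn0 => /eqP ->; rewrite subrr nrm0; lra.
    rewrite leq_eqVlt => /orP [/eqP <-|]; first by rewrite subrr nrm0; lra.
    rewrite ltnS => /IH hi.
    have := nrmD (xs m.+1 - xs m) (xs m - xs k); rewrite addrA subrK.
    have := st m; have -> : M * h m.+1 = M * h m / 2 by rewrite hS mulrA.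
    lra.
  have hsmall : forall e, 0 < e -> exists k, 2 * (M * h k) < e.
    move=> e e0; have [k hk] := geo_small2 (c := 2 * M * rho) (ltac:(nra)) e0.
    by exists k; rewrite /h; move: hk; rewrite !mulrA.
  have [x [hx hxb]] := cauchy_lim (u := xs) (rho := fun k => 2 * (M * h k))
    (fun k m km => ltac:(have := inv2 k m km; have := Mh m; lra)) hsmall.
  exists x; split.
    apply: (closedP cV) => e e0; have [k hk] := hsmall e e0.
    exists (xs k); split; first exact: (inv1 k).1.
    by have := hxb k; lra.
  split; last by have := hxb 0%N; rewrite /= subr0 /h expr0 mulr1 mulrA.
  have cTx : (T \o xs) @ \oo --> T x by apply: continuous_cvg; [exact: cT | exact: hx].
  have hdec : forall k m, (k <= m)%N -> h m <= h k.
    move=> k; elim => [|m IH]; first by rewrite leqn0 => /eqP ->.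
    rewrite leq_eqVlt => /orP [/eqP <-|]; first by [].
    by rewrite ltnS => /IH hi; have := h0 m; rewrite hS; lra.
  apply/eqP; rewrite eq_sym -subr_eq0 -nrm_eq0 eq_le nrm_ge0 andbT.
  apply/ler_addgt0Pr => e e0; rewrite add0r.
  have e2 : 0 < e / 2 by lra.
  have e2c : (0 < ((e / 2)%:C)%C :> C) by rewrite ltcE /= eqxx e2.
  have [N _ HN] := cvgr_dist_lt _ _ cTx _ e2c.
  have [k hk] := geo_small2 (ltW rho0) e2.
  have := HN (maxn N k) (leq_maxl _ _); rewrite nrm_lt /= => h1.
  have h2 := (inv1 (maxn N k)).2.
  have h3 := hdec k (maxn N k) (leq_maxr _ _).
  have := nrmD (w - T (xs (maxn N k))) (T (xs (maxn N k)) - T x).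
  rewrite addrA subrK (nrmC (T (xs _))).
  rewrite /h in h2 h3 *; lra.
exists (4 * M) => w Ww.
have [->|wn0] := eqVneq w 0.
  by exists 0; split => //; split; [exact: linear0 | rewrite !nrm0 mulr0].
have nw : 0 < nrm w by rewrite lt_neqAle nrm_ge0 andbT eq_sym nrm_eq0.
have [x [Vx [Tx hx]]] := main w (2 * nrm w) Ww (ltac:(lra)) (ltac:(lra)).
by exists x; split => //; split => //; have -> : 4 * M * nrm w = 2 * M * (2 * nrm w) by ring.
Qed.

End S.

Section S.
Variable R : realType.
Local Notation C := R[i].

Section Lin.
Variables (U V : lmodType C) (f : U -> V).
Hypothesis hf : is_linear f.
Lemma lin0 : f 0 = 0.
Proof. by have := hf (-1) 0 0; rewrite scaler0 addr0 scaleN1r addNr. Qed.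
Lemma linD x y : f (x + y) = f x + f y.
Proof. by have := hf 1 x y; rewrite !scale1r. Qed.
Lemma linZ (a : C) x : f (a *: x) = a *: f x.
Proof. by have := hf a x 0; rewrite !addr0 lin0 addr0. Qed.
Lemma linB x y : f (x - y) = f x - f y.
Proof. by have := hf (-1) y x; rewrite !scaleN1r addrC [- f y + _]addrC. Qed.
End Lin.

Lemma is_linear_comp (U V W : lmodType C) (f : V -> W) (g : U -> V) :
  is_linear f -> is_linear g -> is_linear (f \o g).
Proof. by move=> hf hg a x y /=; rewrite hg hf. Qed.

Lemma is_linear_iter (U : lmodType C) (f : U -> U) k :
  is_linear f -> is_linear (iter k f).
Proof.
move=> hf; elim: k => [|k IH] a x y //=.
by rewrite IH hf.
Qed.

Lemma is_linear_lin (U V : lmodType C) (f : {linear U -> V}) : is_linear f.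
Proof. by move=> a x y; rewrite linearP. Qed.


Lemma ltc0R (r : R) : (0 < (r%:C)%C :> C) = (0 < r).
Proof. by rewrite ltcE /= eqxx. Qed.

Lemma nrmV (a : C) : nrm (a^-1) = (nrm a)^-1.
Proof. by rewrite /nrm normfV nrmE -(fmorphV (real_complex R)). Qed.

Lemma nrmM (a b : C) : nrm (a * b) = nrm a * nrm b.
Proof. by apply: complexI; rewrite (rmorphM (real_complex R)) -!nrmE normrM. Qed.

Lemma exprz_pred (x : C) (n : nat) : x != 0 -> x * x ^ (n%:Z - 1) = x ^+ n.
Proof.
case: n => [|n] hx; first by rewrite sub0r exprN1 mulfV // expr0.
have -> : (n.+1%:Z - 1) = n%:Z by rewrite -addn1 PoszD addrK.
by rewrite exprS.
Qed.

Lemma res_ident {X Z : completeNormedModType C} (E : {linear X -> Z})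
  (domA : set X) (A : X -> Z) (lam mu : C) (G Rm : Z -> X) :
  is_resolvent E domA A lam G -> is_resolvent E domA A mu Rm -> lam != mu ->
  forall y, G (E (Rm y)) = (lam - mu)^-1 *: (Rm y - G y) /\
            Rm (E (G y)) = (lam - mu)^-1 *: (Rm y - G y).
Proof.
move=> [GL [_ [GR GLi]]] [RL [_ [RR RLi]]] hne y.
have lm0 : lam - mu != 0 by rewrite subr_eq0.
split.
- have [dx hx] := RR y; set x := Rm y in dx hx *.
  have e1 : lam *: E x - A x = (lam - mu) *: E x + y.
    by rewrite -hx scalerBl addrA subrK.
  have := GLi _ dx; rewrite e1 linD // linZ // => h.
  by rewrite -[in RHS]h addrK scalerA mulVf // scale1r.
- have [dx hx] := GR y; set x := G y in dx hx *.
  have e1 : mu *: E x - A x = (mu - lam) *: E x + y.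
    by rewrite -hx scalerBl addrA subrK.
  have := RLi _ dx; rewrite e1 linD // linZ // => h.
  by rewrite -[in RHS]h opprD addrCA subrr addr0 -scaleNr opprB scalerA mulVf // scale1r.
Qed.


Lemma res_approx {X Z : completeNormedModType C} (E : {linear X -> Z})
  (domA : set X) (A : X -> Z) (q : nat) (mu : C) (Rm : Z -> X) :
  is_resolvent E domA A mu Rm -> resolvent_growth E domA A q ->
  forall z, closure (range (iter q.+1 (Rm \o E))) (iter q (Rm \o E) (Rm z)).
Proof.
move=> hR [om [K [K0 hgr]]] z.
have RL := hR.1.
have REL : is_linear (Rm \o E) := is_linear_comp RL (is_linear_lin E).
have ItL k : is_linear (iter k (Rm \o E)) := is_linear_iter k REL.
pose d j := iter j (Rm \o E) (Rm z).
pose D := fix D j := if j is j'.+1 then 2 * (nrm (d j') + D j') else K * nrm z.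
have D0 : forall j, 0 <= D j.
  elim => [|j IH] /=; first by apply: mulr_ge0; [exact: ltW | exact: nrm_ge0].
  by have := nrm_ge0 (d j); lra.
pose B := D q + 2 * nrm mu * (nrm (d q) + D q).
have B0 : 0 <= B.
  have := nrm_ge0 mu; have := nrm_ge0 (d q); have := D0 q.
  rewrite /B => h1 h2 h3; apply: addr_ge0 => //; apply: mulr_ge0; lra.
apply/closureP => e e0.
pose l := Num.max (Num.max (om + 1) (2 * nrm mu + 1)) (Num.max 1 (B / e + 1)).
have l1 : om + 1 <= l by rewrite /l !le_max lexx.
have l2 : 2 * nrm mu + 1 <= l by rewrite /l !le_max lexx ?orbT.
have l3 : 1 <= l by rewrite /l !le_max lexx ?orbT.
have l4 : B / e + 1 <= l by rewrite /l !le_max lexx ?orbT.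
have l0 : 0 < l by lra.
have nmu0 := nrm_ge0 mu.
pose lc := (l%:C)%C.
have Rel : om < complex.Re lc by rewrite /=; lra.
have [G [hG hb]] := hgr lc Rel.
have GL := hG.1.
have nlc : nrm lc = l by rewrite nrmR ger0_norm //; lra.
have lmu : lc != mu.
  by apply/negP => /eqP h; move: nlc; rewrite h; lra.
pose beta := (lc - mu)^-1.
have lm0 : lc - mu != 0 by rewrite subr_eq0.
have [I1 I2] := (fun y => res_ident hG hR lmu y) z.
have I2' : forall y, Rm (E (G y)) = beta *: (Rm y - G y).
  by move=> y; have [] := res_ident hG hR lmu y.
have nb : l * nrm beta <= 2.
  have := nrmD (lc - mu) mu; rewrite subrK nlc => h.
  have hp : 0 < nrm (lc - mu) by lra.
  by rewrite /beta nrmV ler_pdivrMr //; lra.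
have nb0 : 0 <= nrm beta := nrm_ge0 _.
have hGb : forall y, l * nrm (G y) <= K * l ^+ q * nrm y.
  move=> y; have := hb y.
  have nl : `|lc| = lc by rewrite nrmE nlc.
  rewrite nl !nrmE => h.
  have lc0 : 0 < lc by rewrite ltc0R.
  have := h; rewrite -(ler_pM2l lc0).
  have -> : lc * (K%:C%C * lc ^ (q%:Z - 1) * (nrm y)%:C%C) =
            K%:C%C * (lc * lc ^ (q%:Z - 1)) * (nrm y)%:C%C by ring.
  rewrite exprz_pred ?gt_eqF //.
  have -> : K%:C%C * lc ^+ q * (nrm y)%:C%C = ((K * l ^+ q * nrm y)%:C)%C.
    by rewrite !(rmorphM (real_complex R)) (rmorphXn (real_complex R)).
  by rewrite -(rmorphM (real_complex R)) lecR.
pose c j := iter j (Rm \o E) (G z).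
have cS : forall j, c j.+1 = beta *: (d j - c j).
  by move=> j; rewrite /c /d iterSr /= I2' linZ // linB.
have cb : forall j, (j <= q)%N -> l ^+ j.+1 * nrm (c j) <= D j * l ^+ q.
  elim => [|j IH] hj.
    by have := hGb z; rewrite expr1 /=; lra.
  have IH' := IH (ltnW hj).
  have pj : l ^+ j.+1 <= l ^+ q by apply: ler_weXn2l.
  have a0 : 0 <= l ^+ j.+1 by apply: exprn_ge0; lra.
  have u0 := nrm_ge0 (d j); have v0 := nrm_ge0 (c j).
  have s1 : nrm (c j.+1) <= nrm beta * (nrm (d j) + nrm (c j)).
    rewrite cS nrmZ; apply: ler_wpM2l => //.
    by have := nrmD (d j) (- c j); rewrite nrmN.
  have s2 : l ^+ j.+1 * nrm (c j.+1) <= l ^+ j.+1 * (nrm beta * (nrm (d j) + nrm (c j))).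
    exact: ler_wpM2l.
  have s3 : l * (l ^+ j.+1 * nrm (c j.+1)) <=
      l * (l ^+ j.+1 * (nrm beta * (nrm (d j) + nrm (c j)))).
    by apply: ler_wpM2l => //; lra.
  have s4 : l * (l ^+ j.+1 * (nrm beta * (nrm (d j) + nrm (c j)))) =
      (l * nrm beta) * (l ^+ j.+1 * (nrm (d j) + nrm (c j))) by ring.
  have s5 : (l * nrm beta) * (l ^+ j.+1 * (nrm (d j) + nrm (c j))) <=
      2 * (l ^+ j.+1 * (nrm (d j) + nrm (c j))).
    by apply: ler_wpM2r => //; apply: mulr_ge0 => //; lra.
  have s6 : l ^+ j.+1 * nrm (d j) <= l ^+ q * nrm (d j) by apply: ler_wpM2r.
  rewrite exprS /=.
  lra.
have lcq : l * nrm (c q) <= D q.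
  have := cb q (leqnn q); rewrite exprSr -mulrA (mulrC (D q)) ler_pM2l //.
  by apply: exprn_gt0.
have ncq : nrm (c q) <= D q by have := nrm_ge0 (c q); nra.
exists (iter q.+1 (Rm \o E) (l%:C%C *: G z)); split; first by exists (l%:C%C *: G z).
rewrite linZ // -/(c q.+1) cS scalerA -/(d q).
have lb : lc * beta = 1 + mu * beta by rewrite -{1}(subrK mu lc) mulrDl mulfV.
rewrite lb scalerDl scale1r opprD addrA subKr.
have t1 := nrmD (c q) (- ((mu * beta) *: (d q - c q))).
rewrite nrmN nrmZ nrmM in t1.
have t2 := nrmD (d q) (- c q); rewrite nrmN in t2.
have dq0 := nrm_ge0 (d q); have cq0 := nrm_ge0 (c q).
have t3 : nrm mu * nrm beta * nrm (d q - c q) <= nrm mu * nrm beta * (nrm (d q) + nrm (c q)).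
  by apply: ler_wpM2l => //; apply: mulr_ge0.
have t4 : l * (nrm mu * nrm beta * (nrm (d q) + nrm (c q))) =
   nrm mu * (nrm (d q) + nrm (c q)) * (l * nrm beta) by ring.
have t5 : nrm mu * (nrm (d q) + nrm (c q)) * (l * nrm beta) <=
   nrm mu * (nrm (d q) + nrm (c q)) * 2.
  by apply: ler_wpM2l => //; apply: mulr_ge0 => //; lra.
have t6 : nrm mu * (nrm (d q) + nrm (c q)) <= nrm mu * (nrm (d q) + D q).
  by apply: ler_wpM2l => //; lra.
set X0 := nrm (c q - _) in t1 *.
have t7 : l * X0 <= l * (nrm (c q) + nrm mu * nrm beta * (nrm (d q) + nrm (c q))).
  by apply: ler_wpM2l; lra.
have t8 : l * X0 <= B by rewrite /B; lra.
have t9' : B / e < l by lra.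
have t9 : B < l * e by move: t9'; rewrite ltr_pdivrMr.
by rewrite -(ltr_pM2l l0); lra.
Qed.


End S.

Section S.
Variable R : realType.
Local Notation C := R[i].

Lemma cont_delta {V W : normedModType C} (f : V -> W) x : {for x, continuous f} ->
  forall e : R, 0 < e -> exists2 d : R, 0 < d &
    forall y, nrm (x - y) < d -> nrm (f x - f y) < e.
Proof.
move=> cf e e0.
have e0c : 0 < (e%:C)%C :> C by rewrite ltc0R.
have h : \forall t \near x, `|f x - f t| < (e%:C)%C by exact: cvgr_dist_lt.
move/nbhs_ballP: h => [d d0 hd].
have ee : d = ((complex.Re d)%:C)%C by rewrite RRe_real // gtr0_real.
have d0' : 0 < complex.Re d by rewrite -ltc0R -ee.
exists (complex.Re d) => // y hy.
rewrite -nrm_lt; apply: hd; rewrite -ball_normE /= ee nrm_lt //.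
Qed.

Lemma closure_lin {V : normedModType C} (S : set V) :
  (forall (a : C) x y, S x -> S y -> S (a *: x + y)) ->
  forall (a : C) x y, closure S x -> closure S y -> closure S (a *: x + y).
Proof.
move=> hS a x y /closureP hx /closureP hy; apply/closureP => e e0.
have k0 : 0 < nrm a + 1 by have := nrm_ge0 a; lra.
have e1 : 0 < e / (2 * (nrm a + 1)) by apply: divr_gt0 => //; lra.
have [x' [Sx' h1]] := hx _ e1.
have [y' [Sy' h2]] := hy (e / 2) (ltac:(lra)).
exists (a *: x' + y'); split; first exact: hS.
have -> : a *: x + y - (a *: x' + y') = a *: (x - x') + (y - y').
  by rewrite scalerBr opprD addrACA.
have := nrmD (a *: (x - x')) (y - y'); rewrite nrmZ => h3.
have h4 : nrm a * nrm (x - x') <= (nrm a + 1) * nrm (x - x').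
  by apply: ler_wpM2r; [exact: nrm_ge0 | lra].
have h5 : (nrm a + 1) * nrm (x - x') < (nrm a + 1) * (e / (2 * (nrm a + 1))).
  by rewrite ltr_pM2l.
have h6 : (nrm a + 1) * (e / (2 * (nrm a + 1))) = e / 2.
  by field; rewrite gt_eqF.
lra.
Qed.

End S.


Unset Implicit Arguments. Set Strict Implicit.

Theorem proposition3p8 (R : realType) (X Z : completeNormedModType R[i])
  (E : {linear X -> Z}) (domA : set X) (A : X -> Z) (pres : nat)
  (mu : R[i]) (Rmu : Z -> X) :
  continuous E ->
  closed_densely_defined domA A ->
  resolvent_index E domA A pres ->
  is_resolvent E domA A mu Rmu ->
  let p := pres.+1 in
  let Xran := closure (range (iter p (Rmu \o E))) in
  let Zran := closure (range (iter p (E \o Rmu))) in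
  closed (E @` Xran) ->
  Xran `&` [set x | iter p (Rmu \o E) x = 0] = [set 0] ->
  boundedly_invertible_between E Xran Zran.
Proof.
move=> cE _ [hgr _] hR p Xran Zran cW hker.
have RL := hR.1.
have REL : is_linear (Rmu \o E) := is_linear_comp RL (is_linear_lin E).
have ItL k : is_linear (iter k (Rmu \o E)) := is_linear_iter k REL.
have comm : forall k x, E (iter k (Rmu \o E) x) = iter k (E \o Rmu) (E x).
  by move=> k x; elim: k => [|k IH] //=; rewrite IH.
have V0 : Xran 0.
  by apply: subset_closure; exists 0 => //; exact: lin0 (ItL p).
have VL : forall (a : R[i]) x y, Xran x -> Xran y -> Xran (a *: x + y).
  apply: closure_lin => a _ _ [u _ <-] [v _ <-].
  by exists (a *: u + v) => //; rewrite (ItL p).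
have cV : closed Xran by exact: closed_closure.
have [c hc] := omt cE cV V0 VL cW.
have inj : forall x, Xran x -> E x = 0 -> x = 0.
  move=> x Xx hEx.
  have : (Xran `&` [set x | iter p (Rmu \o E) x = 0]) x.
    split => //; change (iter pres.+1 (Rmu \o E) x = 0).
    by rewrite iterSr /= hEx (lin0 RL) (lin0 (ItL _)).
  by rewrite hker.
have incl : E @` Xran `<=` Zran.
  move=> _ [x Xx <-]; apply/closureP => e e0.
  have [d d0 hd] := cont_delta (cE x) e0.
  have [_ [[u _ <-] hu]] := (closureP _ _).1 Xx d d0.
  exists (E (iter p (Rmu \o E) u)); split; last exact: hd.
  by exists (E u) => //; rewrite comm.
have surj : forall z, Zran z -> (E @` Xran) z.
  move=> z Zz; apply: (closedP cW) => e e0.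
  have [_ [[u _ <-] hu]] := (closureP _ _).1 Zz e e0.
  exists (iter p (E \o Rmu) u); split => //.
  exists (iter pres (Rmu \o E) (Rmu u)); first exact: res_approx hR hgr u.
  by rewrite comm /p iterSr.
have hS : forall z, exists x, Zran z ->
    Xran x /\ E x = z /\ nrm x <= c * nrm z.
  move=> z; case: (pselect (Zran z)) => [Zz|nZ]; last by exists 0.
  by have [x hx] := hc z (surj z Zz); exists x.
have [S HS] := choice hS.
split => //; exists S; split.
  by move=> z Zz; have [h1 [h2 _]] := HS z Zz.
split.
  move=> x Xx; have [h1 [h2 _]] := HS (E x) (incl _ (ex_intro2 _ _ x Xx erefl)).
  apply/eqP; rewrite -subr_eq0; apply/eqP; apply: inj.
    by rewrite -scaleN1r addrC; apply: VL.
  by rewrite linearB h2 subrr.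
exists c => z Zz; have [_ [_ h3]] := HS z Zz.
by rewrite !nrmE -(rmorphM (real_complex R)) lecR.
Qed.
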